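(* The maximal eigenvalue radius function $\rho$ associated to an admissible weight $\varphi:\mathbb{C}^n\to\mathbb{R}$ is bounded.
   Context: A $C^2$ function $\varphi:\mathbb{C}^n\to\mathbb{R}$ is plurisubharmonic if its complex Hessian $(\partial^2\varphi/\partial z_j\partial\bar z_k)$ is positive semidefinite everywhere. It is admissible if it is $C^2$, plurisubharmonic, and (a) there is $D<\infty$ with $\sup_{B(z,2r)}\Delta\varphi\le D\sup_{B(z,r)}\Delta\varphi$ for all $z\in\mathbb{C}^n$, $r>0$ ($\Delta$ the Euclidean Laplacian on $\mathbb{C}^n\cong\mathbb{R}^{2n}$, $B$ Euclidean balls), and (b) there is $c>0$ with $\inf_{z\in\mathbb{C}^n}\sup_{w\in B(z,c)}\Delta\varphi(w)>0$. Its maximal eigenvalue radius function is $\rho(z)=\sup\{r>0:\sup_{w\in B(z,r)}\Delta\varphi(w)\le r^{-2}\}$. *)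

(* Defs.v *)
From HB Require Import structures.
From mathcomp Require Import all_boot all_order all_algebra.
From mathcomp Require Import all_classical all_reals all_analysis.
From mathcomp Require Import complex.
Set Implicit Arguments. Unset Strict Implicit. Unset Printing Implicit Defensive.
Import Order.TTheory GRing.Theory Num.Theory.
Import numFieldNormedType.Exports.
Local Open Scope classical_set_scope.
Local Open Scope ring_scope.

(* C^n is identified with R^(2n) = 'rV[R]_(n + n): the point
   z = (x_1 + i y_1, ..., x_n + i y_n) has real coordinates
   x_j = z (lshift n j) and y_j = z (rshift n j). *)
Definition Cn (R : realType) (n : nat) := 'rV[R]_(n + n).

Definition ecoord (R : realType) (m : nat) (k : 'I_m) : 'rV[R]_m := delta_mx 0 k.

Definition pd (R : realType) (m : nat) (k : 'I_m) (f : 'rV[R]_m -> R) : 'rV[R]_m -> R :=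
  fun z => 'D_(ecoord R k) f z.

Definition C2 (R : realType) (m : nat) (f : 'rV[R]_m -> R) : Prop :=
  continuous f /\
  (forall k z, derivable f z (ecoord R k)) /\
  (forall k, continuous (pd k f)) /\
  (forall k l z, derivable (pd k f) z (ecoord R l)) /\
  (forall k l, continuous (pd l (pd k f))).

(* complex Hessian  d^2 phi / dz_j d(bar z_k)
   = 1/4 [ (phi_{x_j x_k} + phi_{y_j y_k}) + i (phi_{x_j y_k} - phi_{y_j x_k}) ] *)
Definition complex_hessian (R : realType) (n : nat) (phi : Cn R n -> R) (z : Cn R n)
  : 'M[R[i]]_n :=
  \matrix_(j, k)
    (Complex (4^-1 * (pd (lshift n k) (pd (lshift n j) phi) z
              + pd (rshift n k) (pd (rshift n j) phi) z))
     (4^-1 * (pd (rshift n k) (pd (lshift n j) phi) z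
                  - pd (lshift n k) (pd (rshift n j) phi) z))).

Definition psd_mx (R : realType) (n : nat) (H : 'M[R[i]]_n) : Prop :=
  forall w : 'cV[R[i]]_n, 0 <= \sum_(j < n) \sum_(k < n) (w j 0)^* * H j k * w k 0.

Definition plurisubharmonic (R : realType) (n : nat) (phi : Cn R n -> R) : Prop :=
  forall z, psd_mx (complex_hessian phi z).

Definition laplacian (R : realType) (m : nat) (f : 'rV[R]_m -> R) : 'rV[R]_m -> R :=
  fun z => \sum_(k < m) pd k (pd k f) z.

Definition enorm (R : realType) (m : nat) (v : 'rV[R]_m) : R :=
  Num.sqrt (\sum_(k < m) v 0 k ^+ 2).

Definition eball (R : realType) (m : nat) (z : 'rV[R]_m) (r : R) : set 'rV[R]_m :=
  [set w | enorm (w - z) < r].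

Definition supLap (R : realType) (n : nat) (phi : Cn R n -> R) (z : Cn R n) (r : R)
  : \bar R :=
  ereal_sup [set (laplacian phi w)%:E | w in eball z r].

Definition admissible (R : realType) (n : nat) (phi : Cn R n -> R) : Prop :=
  C2 phi /\ plurisubharmonic phi /\
  (exists D : R, forall z r, 0 < r ->
      (supLap phi z (2 * r) <= D%:E * supLap phi z r)%E) /\
  (exists c : R, 0 < c /\
      (0 < ereal_inf [set supLap phi z c | z in [set: Cn R n]])%E).

Definition rho (R : realType) (n : nat) (phi : Cn R n -> R) (z : Cn R n) : \bar R :=
  ereal_sup [set r%:E | r in [set r : R | 0 < r /\ (supLap phi z r <= (r ^- 2)%:E)%E]].

(* Main.v *)
Require Import Defs.
From HB Require Import structures.
From mathcomp Require Import all_boot all_order all_algebra.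
From mathcomp Require Import all_classical all_reals all_analysis.
From mathcomp Require Import complex.
Import Order.TTheory GRing.Theory Num.Theory.
Local Open Scope classical_set_scope.
Local Open Scope ring_scope.

Theorem mainTheorem12 (R : realType) (n : nat) (phi : Cn R n -> R) :
  admissible phi ->
  exists M : R, forall z : Cn R n, (rho phi z <= M%:E)%E.
Proof.
move=> [_ [_ [_ [c [c0 hinf]]]]].
set I := ereal_inf _ in hinf.
have [e [e0 he]] : exists e : R, 0 < e /\ forall z, (e%:E <= supLap phi z c)%E.
  have lb : forall z, (I <= supLap phi z c)%E.
    by move=> z; apply: ereal_inf_lbound; exists z.
  move: hinf lb; case: I => [x| |] //.
  - by rewrite lte_fin => x0 lb; exists x; split => // z; exact: lb.
  - move=> _ lb; exists 1; split => // z.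
    by have := lb z; rewrite leye_eq => /eqP ->; rewrite leey.
exists (Num.max c (Num.max 1 e^-1)) => z.
apply: ge_ereal_sup => _ [r [r0 hr] <-].
rewrite lee_fin leNgt; apply/negP => hM.
rewrite !gt_max in hM; case/and3P: hM => cr r1 er.
have h1 : (supLap phi z c <= supLap phi z r)%E.
  apply: ereal_sup_le => _ [w hw <-]; exists w => //.
  by rewrite /eball /= in hw *; apply: lt_trans hw _.
have := le_trans (he z) (le_trans h1 hr); rewrite lee_fin.
apply/negP; rewrite -ltNge.
have rr : r < r ^+ 2 by rewrite expr2 -{1}(mulr1 r) ltr_pM2l.
have : e^-1 < r ^+ 2 by apply: lt_trans rr.
move=> H; rewrite -[e]invrK ltf_pV2 ?posrE ?exprn_gt0 ?invr_gt0 //.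
Qed.
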